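(* Let $P$ be a weighted combinatorial optimization problem, let $A$ be a deterministic algorithm for $P$ that uses symbolic perturbation, and let $\mathcal{C}$ be any null case of $P$. (d) If for every instance $(S,w) \notin \mathcal{C}$ the algorithm returns $A(S,w) \in L$ with $\mathrm{cost}(w,A(S,w)) = \mathrm{OPT}(S,w)$, then the same holds for every instance $(S,w)$. (e) For each $S=(n,W,L,\mathrm{cost}) \in P$, let $c(S,\cdot) : W \to \mathbb{R}$ be continuous. Suppose that for every instance $(S,w) \notin \mathcal{C}$ the algorithm returns $A(S,w) \in L$ with $\mathrm{cost}(w,A(S,w)) \le c(S,w)\cdot \mathrm{OPT}(S,w)$. Then the same holds for every instance $(S,w)$.
   Context: Let $Q$ be a subfield of $\mathbb{R}$ (e.g. $\mathbb{R}$, $\mathbb{Q}$, or the real algebraic numbers). Equip $Q^n$ with the Euclidean metric $d$. For $x \in Q^n$ and $\epsilon>0$, the $\epsilon$-neighborhood of $x$ is $\{y \in Q^n \mid d(x,y)<\epsilon\}$. A neighborhood of $x$ is an $\epsilon$-neighborhood of $x$ for some $\epsilon>0$. A set $U \subseteq Q^n$ is open if it contains a neighborhood of each of its points. A set $C \subseteq Q^n$ is nowhere open if it contains no non-empty open subset of $Q^n$. A set $X \subseteq Q^n$ is semi-open if for every $x \in X$ and every neighborhood $N$ of $x$ there is a non-empty open set $U \subseteq Q^n$ with $U \subseteq N \cap X$. For $x \in \mathbb{R}$, $\mathrm{sgn}(x) = x/|x|$ if $x \neq 0$ and $\mathrm{sgn}(0)=0$. Problems: A weighted combinatorial optimization (minimization)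 problem $P$ is a set of problem structures; each structure $S=(n,W,L,\mathrm{cost})$ consists of a positive integer $n$, a semi-open set $W \subseteq Q^n$ of admissible weight vectors, a finite non-empty set $L$ of feasible solutions, and a function $\mathrm{cost} : W \times L \to \mathbb{R}$ such that $\mathrm{cost}(\cdot,l)$ is continuous on $W$ for every $l \in L$. An instance is a pair $(S,w)$ with $S \in P$ and $w \in W$, and $\mathrm{OPT}(S,w)=\min_{l\in L}\mathrm{cost}(w,l)$. A null case of $P$ is a set $\mathcal{C}$ of instances of $P$ such that for every structure $S=(n,W,L,\mathrm{cost}) \in P$ the set $\{w \in W \mid (S,w) \in \mathcal{C}\}$ is nowhere open. Algorithms: A deterministic algorithm $A$ for $P$ assigns to each structure $S=(n,W,L,\mathrm{cost}) \in P$ a finite rooted binary decision tree $T_S$. Each leaf is labelled with an element of $L \cup \{l_f\}$, where $l_f \notin L$ is a special symbol representing failure. Each internal node $u$ is labelled with a continuous branching function $v_u : W \to Q$. On input $(S,w)$, $A$ starts at the root of $T_S$. At an internal node $u$ it moves to the left child if $v_u(w)<0$ and to the right child if $v_u(w)>0$. If $v_u(w)=0$ (a tie), it moves to the left or right child according to a deterministic tie-breaking policy, i.e. a rule fixing, for every instance $(S,w)$ and every internal node $u$ with $v_u(w)=0$, which child is taken. $A$ returns the label $A(S,w)$ of the leaf reached. Directions: Let $W \subseteq Q^n$ be semi-open, $w \in W$, and $h : \mathbb{R} \to Q^n$ with $h(0)=0$ and $h$ continuous at $0$. $W$ continues into direction $h$ at $w$ if there is $\delta>0$ such that for every $0<a<\delta$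 some neighborhood of $w+h(a)$ is contained in $W$. If $W$ continues into direction $h$ at $w$ and $f : W \to Q$ is continuous, then $f$ is increasing (resp. constant, decreasing) into direction $h$ at $w$ if the following holds: there is $\delta>0$ such that for every $0<a<\delta$ there is a neighborhood $N_a \subseteq W$ of $w+h(a)$ with $\mathrm{sgn}(f(y)-f(w)) = 1$ (resp. $0$, $-1$) for all $y \in N_a$. Symbolic perturbation: $A$ uses symbolic perturbation if, for every instance $(S,w)$ with $S=(n,W,L,\mathrm{cost})$, there exists a function $h_{S,w} : \mathbb{R} \to Q^n$ satisfying all of the following: - $h_{S,w}(0)=0$ and $h_{S,w}$ is continuous at $0$; - $W$ continues into direction $h_{S,w}$ at $w$; - every branching function of $T_S$ is decreasing, constant, or increasing into direction $h_{S,w}$ at $w$; - whenever a tie $v_u(w)=0$ occurs at an internal node $u$ on input $(S,w)$, $A$ takes the left child if $v_u$ is decreasing into direction $h_{S,w}$ at $w$, and the right child otherwise. *)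

(* Defs.v *)
From Stdlib Require Import Reals List.
Open Scope R_scope.
Set Implicit Arguments.

(** Points of Q^n are represented as functions nat -> R whose first n
    coordinates lie in Q and whose remaining coordinates are 0. *)
Definition vec := nat -> R.

Definition is_subfield (Q : R -> Prop) : Prop :=
  Q 0 /\ Q 1 /\
  (forall x y, Q x -> Q y -> Q (x + y)) /\
  (forall x, Q x -> Q (- x)) /\
  (forall x y, Q x -> Q y -> Q (x * y)) /\
  (forall x, Q x -> x <> 0 -> Q (/ x)).

Definition inQn (Q : R -> Prop) (n : nat) (x : vec) : Prop :=
  (forall i, (i < n)%nat -> Q (x i)) /\ (forall i, (n <= i)%nat -> x i = 0).

Fixpoint sumsq (n : nat) (x y : vec) : R :=
  match n with
  | O => 0
  | S m => sumsq m x y + (x m - y m) ^ 2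
  end.

Definition dist (n : nat) (x y : vec) : R := sqrt (sumsq n x y).

Definition vadd (x y : vec) : vec := fun i => x i + y i.

Definition nbhd (Q : R -> Prop) (n : nat) (x : vec) (eps : R) (y : vec) : Prop :=
  inQn Q n y /\ dist n x y < eps.

Definition is_open (Q : R -> Prop) (n : nat) (U : vec -> Prop) : Prop :=
  (forall x, U x -> inQn Q n x) /\
  (forall x, U x -> exists eps, 0 < eps /\ forall y, nbhd Q n x eps y -> U y).

Definition nowhere_open (Q : R -> Prop) (n : nat) (C : vec -> Prop) : Prop :=
  forall U : vec -> Prop, is_open Q n U -> (forall x, U x -> C x) ->
    forall x, ~ U x.

Definition semi_open (Q : R -> Prop) (n : nat) (X : vec -> Prop) : Prop :=
  (forall x, X x -> inQn Q n x) /\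
  (forall x, X x -> forall eps, 0 < eps ->
     exists U : vec -> Prop, is_open Q n U /\ (exists u, U u) /\
       (forall y, U y -> nbhd Q n x eps y /\ X y)).

Definition continuous_on (n : nat) (W : vec -> Prop) (f : vec -> R) : Prop :=
  forall x, W x -> forall eps, 0 < eps -> exists delta, 0 < delta /\
    forall y, W y -> dist n x y < delta -> Rabs (f y - f x) < eps.

Definition sgn (x : R) : R :=
  match total_order_T x 0 with
  | inleft (left _) => -1
  | inleft (right _) => 0
  | inright _ => 1
  end.

(** Problem structures S = (n, W, L, cost); L is a finite non-empty set,
    given as a type with an exhaustive non-empty list of its elements. *)
Record structure := mkStructure {
  sn : nat;
  sW : vec -> Prop;
  sL : Type;
  sLenum : list sL;
  sLfull : forall l, In l sLenum;
  sLne : sLenum <> nil;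
  scost : vec -> sL -> R
}.

Definition wf_structure (Q : R -> Prop) (S : structure) : Prop :=
  (sn S >= 1)%nat /\ semi_open Q (sn S) (sW S) /\
  (forall l, continuous_on (sn S) (sW S) (fun w => scost S w l)).

Definition OPT (S : structure) (w : vec) : R :=
  match sLenum S with
  | nil => 0
  | x :: xs => fold_right (fun y m => Rmin (scost S w y) m) (scost S w x) xs
  end.

Definition problem := structure -> Prop.

(** Finite rooted binary decision trees; leaves are labelled with
    [Some l] (l in L) or [None] (the failure symbol l_f). *)
Inductive dtree (L : Type) : Type :=
  | Leaf : option L -> dtree L
  | Node : (vec -> R) -> dtree L -> dtree L -> dtree L.

Fixpoint node_fun {L : Type} (t : dtree L) (v : vec -> R) : Prop :=
  match t with
  | Leaf _ => False
  | Node v' l r => v = v' \/ node_fun l v \/ node_fun r v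
  end.

(** A deterministic algorithm: a decision tree per structure, plus a
    deterministic tie-breaking policy: for an instance (S,w) and an internal
    node (identified by its path from the root, as the reversed list of
    directions taken, [true] = left), [atb S w p = true] means "go left". *)
Record algorithm := mkAlgorithm {
  atree : forall S : structure, dtree (sL S);
  atb : forall S : structure, vec -> list bool -> bool
}.

Definition is_algorithm (Q : R -> Prop) (P : problem) (A : algorithm) : Prop :=
  forall S, P S -> forall v, node_fun (atree A S) v ->
    (forall w, sW S w -> Q (v w)) /\ continuous_on (sn S) (sW S) v.

Fixpoint run_tree {L : Type} (t : dtree L) (w : vec) (tb : list bool -> bool)
    (p : list bool) : option L :=
  match t with
  | Leaf o => o
  | Node v l r =>
      match total_order_T (v w) 0 with
      | inleft (left _) => run_tree l w tb (true :: p)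
      | inright _ => run_tree r w tb (false :: p)
      | inleft (right _) =>
          if tb p then run_tree l w tb (true :: p) else run_tree r w tb (false :: p)
      end
  end.

Definition run (A : algorithm) (S : structure) (w : vec) : option (sL S) :=
  run_tree (atree A S) w (atb A S w) nil.

Definition continues_into (Q : R -> Prop) (n : nat) (W : vec -> Prop)
    (h : R -> vec) (w : vec) : Prop :=
  exists delta, 0 < delta /\ forall a, 0 < a < delta ->
    exists eps, 0 < eps /\ forall y, nbhd Q n (vadd w (h a)) eps y -> W y.

Definition moves_into (Q : R -> Prop) (n : nat) (W : vec -> Prop) (f : vec -> R)
    (h : R -> vec) (w : vec) (s : R) : Prop :=
  exists delta, 0 < delta /\ forall a, 0 < a < delta ->
    exists eps, 0 < eps /\
      (forall y, nbhd Q n (vadd w (h a)) eps y -> W y) /\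
      (forall y, nbhd Q n (vadd w (h a)) eps y -> sgn (f y - f w) = s).

Definition increasing_into Q n W f h w := moves_into Q n W f h w 1.
Definition constant_into Q n W f h w := moves_into Q n W f h w 0.
Definition decreasing_into Q n W f h w := moves_into Q n W f h w (-1).

Fixpoint ties_ok {L : Type} (Q : R -> Prop) (n : nat) (W : vec -> Prop)
    (h : R -> vec) (w : vec) (tb : list bool -> bool) (t : dtree L)
    (p : list bool) : Prop :=
  match t with
  | Leaf _ => True
  | Node v l r =>
      match total_order_T (v w) 0 with
      | inleft (left _) => ties_ok Q n W h w tb l (true :: p)
      | inright _ => ties_ok Q n W h w tb r (false :: p)
      | inleft (right _) =>
          (tb p = true <-> decreasing_into Q n W v h w) /\
          (if tb p then ties_ok Q n W h w tb l (true :: p)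
           else ties_ok Q n W h w tb r (false :: p))
      end
  end.

Definition uses_symbolic_perturbation (Q : R -> Prop) (P : problem)
    (A : algorithm) : Prop :=
  forall S, P S -> forall w, sW S w ->
    exists h : R -> vec,
      (forall a, inQn Q (sn S) (h a)) /\
      (forall i, h 0 i = 0) /\
      (forall eps, 0 < eps -> exists delta, 0 < delta /\
         forall a, Rabs a < delta -> dist (sn S) (h a) (h 0) < eps) /\
      continues_into Q (sn S) (sW S) h w /\
      (forall v, node_fun (atree A S) v ->
         decreasing_into Q (sn S) (sW S) v h w \/
         constant_into Q (sn S) (sW S) v h w \/
         increasing_into Q (sn S) (sW S) v h w) /\
      ties_ok Q (sn S) (sW S) h w (atb A S w) (atree A S) nil.

Definition null_case (Q : R -> Prop) (P : problem)
    (C : forall S : structure, vec -> Prop) : Prop :=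
  forall S, P S -> nowhere_open Q (sn S) (fun w => sW S w /\ C S w).

(* Main.v *)
Require Import Defs.
From Stdlib Require Import Reals List.
Open Scope R_scope.
From Stdlib Require Import Lra Lia Classical.
Notation dist := Defs.dist.

Lemma sumsq_nonneg n x y : 0 <= sumsq n x y.
Proof. induction n; simpl; [lra|]. pose proof (pow2_ge_0 (x n - y n)); lra. Qed.

Lemma vd_nonneg n x y : 0 <= dist n x y.
Proof. unfold dist; apply sqrt_pos. Qed.

Lemma sumsq_sym n x y : sumsq n x y = sumsq n y x.
Proof. induction n; simpl; [lra|]. rewrite IHn; ring. Qed.

Lemma vd_sym n x y : dist n x y = dist n y x.
Proof. unfold dist; now rewrite sumsq_sym. Qed.

Lemma sumsq_self n x : sumsq n x x = 0.
Proof. induction n; simpl; [lra|]. rewrite IHn; ring. Qed.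

Lemma vd_self n x : dist n x x = 0.
Proof. unfold dist; rewrite sumsq_self; apply sqrt_0. Qed.

Lemma sumsq_vadd n x d z : (forall i, z i = 0) -> sumsq n x (vadd x d) = sumsq n d z.
Proof. intros Hz; induction n; simpl; [lra|]. rewrite IHn, Hz; unfold vadd; ring. Qed.

Lemma vd_vadd n x d z : (forall i, z i = 0) -> dist n x (vadd x d) = dist n d z.
Proof. intros; unfold dist; now rewrite (sumsq_vadd n x d z). Qed.

Fixpoint L1 (n : nat) (x y : vec) : R :=
  match n with O => 0 | S m => L1 m x y + Rabs (x m - y m) end.

Lemma L1_nonneg n x y : 0 <= L1 n x y.
Proof. induction n; simpl; [lra|]. pose proof (Rabs_pos (x n - y n)); lra. Qed.

Lemma sumsq_L1 n x y : sumsq n x y <= (L1 n x y)^2.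
Proof.
  induction n; simpl; [lra|].
  pose proof (L1_nonneg n x y). pose proof (Rabs_pos (x n - y n)).
  assert ((x n - y n)^2 = Rabs (x n - y n) ^2).
  { rewrite <- (Rsqr_pow2 (Rabs _)), <- Rsqr_abs, Rsqr_pow2; auto. }
  simpl in *. nra.
Qed.

Lemma vd_L1 n x y : dist n x y <= L1 n x y.
Proof.
  unfold dist. rewrite <- (sqrt_pow2 (L1 n x y)) by apply L1_nonneg.
  apply sqrt_le_1_alt, sumsq_L1.
Qed.

Lemma L1_tri n x y z : L1 n x z <= L1 n x y + L1 n y z.
Proof.
  induction n; simpl; [lra|].
  pose proof (Rabs_triang (x n - y n) (y n - z n)).
  replace (x n - y n + (y n - z n)) with (x n - z n) in H by ring. lra.
Qed.

Lemma sumsq_mono m k x y : (m <= k)%nat -> sumsq m x y <= sumsq k x y.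
Proof.
  induction 1; [lra|]. simpl. pose proof (pow2_ge_0 (x m0 - y m0)); lra.
Qed.

Lemma coord_le_dist n i x y : (i < n)%nat -> Rabs (x i - y i) <= dist n x y.
Proof.
  intros Hi. unfold dist. rewrite <- sqrt_Rsqr_abs. apply sqrt_le_1_alt.
  rewrite Rsqr_pow2. eapply Rle_trans; [|apply (sumsq_mono (S i))]; [|lia].
  simpl. pose proof (sumsq_nonneg i x y); lra.
Qed.

Lemma L1_le_dist N x y : forall m, (m <= N)%nat -> L1 m x y <= INR m * dist N x y.
Proof.
  induction m; intros Hm; [simpl; lra|].
  change (L1 (S m) x y) with (L1 m x y + Rabs (x m - y m)). rewrite S_INR. pose proof (coord_le_dist N m x y ltac:(lia)).
  specialize (IHm ltac:(lia)). lra.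
Qed.

Definition K (n : nat) := INR n + 1.

Lemma K_ge1 n : 1 <= K n.
Proof. unfold K; pose proof (pos_INR n); lra. Qed.

Lemma vd_tri n x y z : dist n x z <= K n * (dist n x y + dist n y z).
Proof.
  eapply Rle_trans; [apply vd_L1|].
  eapply Rle_trans; [apply (L1_tri n x y z)|].
  pose proof (L1_le_dist n x y n (le_n _)). pose proof (L1_le_dist n y z n (le_n _)).
  pose proof (vd_nonneg n x y). pose proof (vd_nonneg n y z).
  unfold K. nra.
Qed.

Lemma K_pos n : 0 < K n.
Proof. pose proof (K_ge1 n); lra. Qed.

Lemma close3 n x y z d : 0 < d -> dist n x y < d / (2 * K n) -> dist n y z < d / (2 * K n) ->
  dist n x z < d.
Proof.
  intros Hd H1 H2. pose proof (vd_tri n x y z). pose proof (K_pos n).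
  assert (K n * (d / (2 * K n)) = d / 2) by (field; lra).
  assert (K n * dist n x y < d/2) by (rewrite <- H3; apply Rmult_lt_compat_l; lra).
  assert (K n * dist n y z < d/2) by (rewrite <- H3; apply Rmult_lt_compat_l; lra).
  lra.
Qed.

Lemma inQn_vadd Q n x y : is_subfield Q -> inQn Q n x -> inQn Q n y -> inQn Q n (vadd x y).
Proof.
  intros (_&_&Hadd&_) [H1 H2] [H3 H4]; split; intros i Hi; unfold vadd.
  - apply Hadd; auto.
  - rewrite H2, H4; auto; ring.
Qed.

Lemma nbhd_self Q n x e : inQn Q n x -> 0 < e -> nbhd Q n x e x.
Proof. intros; split; auto. rewrite vd_self; auto. Qed.

Lemma nbhd_mono Q n x e e' y : nbhd Q n x e y -> e <= e' -> nbhd Q n x e' y.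
Proof. intros [H1 H2] H; split; auto; lra. Qed.

Lemma sgn_m1 x : sgn x = -1 -> x < 0.
Proof. unfold sgn; destruct (total_order_T x 0) as [[H|H]|H]; intros; lra. Qed.
Lemma sgn_1 x : sgn x = 1 -> 0 < x.
Proof. unfold sgn; destruct (total_order_T x 0) as [[H|H]|H]; intros; lra. Qed.
Lemma sgn_0 x : sgn x = 0 -> x = 0.
Proof. unfold sgn; destruct (total_order_T x 0) as [[H|H]|H]; intros; lra. Qed.
Lemma sgn_00 : sgn 0 = 0.
Proof. unfold sgn; destruct (total_order_T 0 0) as [[H|H]|H]; lra. Qed.

Lemma moves_excl Q n W f h w s1 s2 :
  (forall a, inQn Q n (vadd w (h a))) ->
  moves_into Q n W f h w s1 -> moves_into Q n W f h w s2 -> s1 = s2.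
Proof.
  intros Hin [d1 [Hd1 H1]] [d2 [Hd2 H2]].
  set (a := Rmin d1 d2 / 2).
  assert (Ha: 0 < a < Rmin d1 d2) by (unfold a;
     pose proof (Rmin_glb_lt d1 d2 0 ltac:(lra) ltac:(lra)); lra).
  destruct (H1 a) as [e1 [He1 [_ G1]]]. { pose proof (Rmin_l d1 d2); lra. }
  destruct (H2 a) as [e2 [He2 [_ G2]]]. { pose proof (Rmin_r d1 d2); lra. }
  rewrite <- (G1 (vadd w (h a))), <- (G2 (vadd w (h a))); auto using nbhd_self.
Qed.

Definition hgood Q n (h : R -> vec) :=
  (forall a, inQn Q n (h a)) /\ (forall i, h 0 i = 0) /\
  (forall eps, 0 < eps -> exists delta, 0 < delta /\
         forall a, Rabs a < delta -> dist n (h a) (h 0) < eps).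

Lemma Rmin_pos a b : 0 < a -> 0 < b -> 0 < Rmin a b.
Proof. intros; apply Rmin_glb_lt; auto. Qed.

Lemma near Q n h w d : hgood Q n h -> 0 < d -> exists delta, 0 < delta /\
  forall a, 0 < a < delta -> dist n w (vadd w (h a)) < d.
Proof.
  intros (_&H0&Hc) Hd. destruct (Hc d Hd) as [dl [Hdl Hl]]. exists dl; split; auto.
  intros b Hb. rewrite (vd_vadd n w (h b) (h 0) H0). apply Hl. rewrite Rabs_right; lra.
Qed.

Lemma key {L : Type} Q (hQ : is_subfield Q) n W (w : vec) (h : R -> vec)
  (Hw : inQn Q n w) (HW : W w) (Hh : hgood Q n h) (tbw : list bool -> bool) :
  forall (t : dtree L) p,
  (forall v, node_fun t v -> continuous_on n W v /\
     (decreasing_into Q n W v h w \/ constant_into Q n W v h w \/ increasing_into Q n W v h w)) ->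
  ties_ok Q n W h w tbw t p ->
  exists delta, 0 < delta /\ forall a, 0 < a < delta -> exists eps, 0 < eps /\
   forall y, nbhd Q n (vadd w (h a)) eps y -> W y ->
   forall hy tby, hgood Q n hy ->
   ties_ok Q n W hy y tby t p -> run_tree t y tby p = run_tree t w tbw p.
Proof.
  assert (Hin : forall a, inQn Q n (vadd w (h a))).
  { intros; apply inQn_vadd; auto. apply Hh. }
  induction t as [o|v l IHl r IHr]; intros p Hnodes Hties.
  { exists 1; split; [lra|]. intros a _; exists 1; split; [lra|]. reflexivity. }
  assert (Hv := Hnodes v (or_introl eq_refl)).
  assert (Hnl : forall u, node_fun l u -> continuous_on n W u /\
     (decreasing_into Q n W u h w \/ constant_into Q n W u h w \/ increasing_into Q n W u h w))
   by (intros; apply Hnodes; simpl; auto).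
  assert (Hnr : forall u, node_fun r u -> continuous_on n W u /\
     (decreasing_into Q n W u h w \/ constant_into Q n W u h w \/ increasing_into Q n W u h w))
   by (intros; apply Hnodes; simpl; auto).
  destruct Hv as [Hvc Htri].
  revert Hties; simpl; destruct (total_order_T (v w) 0) as [[Hw1|Hw1]|Hw1]; intros Hties.
  -
    destruct (IHl (true :: p) Hnl Hties) as [d1 [Hd1 H1]].
    destruct (Hvc w HW (- v w) ltac:(lra)) as [dv [Hdv Hv]].
    assert (Hdv2 : 0 < dv / (2 * K n)) by (pose proof (K_pos n); apply Rdiv_lt_0_compat; lra).
    destruct (near Q n h w _ Hh Hdv2) as [dh [Hdh Hnear]].
    exists (Rmin d1 dh); split; [apply Rmin_pos; auto|].
    intros a Ha. destruct (H1 a) as [e1 [He1 G1]]. { pose proof (Rmin_l d1 dh); lra. }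
    exists (Rmin e1 (dv / (2 * K n))); split; [apply Rmin_pos; auto|].
    intros y Hy HWy hy tby Hhy Htiesy.
    assert (Hvy : v y < 0).
    { assert (dist n w y < dv).
      { apply (close3 n w (vadd w (h a)) y dv Hdv).
        - apply Hnear. pose proof (Rmin_r d1 dh); lra.
        - destruct Hy as [_ Hy]. pose proof (Rmin_r e1 (dv / (2 * K n))); lra. }
      specialize (Hv y HWy H). apply Rabs_def2 in Hv. lra. }
    revert Htiesy; simpl; destruct (total_order_T (v y) 0) as [[Hy1|Hy1]|Hy1]; intros Htiesy; try lra.
    apply (G1 y ltac:(eapply nbhd_mono; [apply Hy|apply Rmin_l]) HWy hy tby Hhy Htiesy).
  -
    destruct Hties as [Htb Hties].
    destruct Htri as [Hdec|[Hcst|Hinc]].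
    +
      assert (Hp : tbw p = true) by (apply Htb; auto). rewrite Hp in Hties |- *.
      destruct (IHl (true :: p) Hnl Hties) as [d1 [Hd1 H1]].
      destruct Hdec as [dd [Hdd Hd]].
      exists (Rmin d1 dd); split; [apply Rmin_pos; auto|].
      intros a Ha. destruct (H1 a) as [e1 [He1 G1]]. { pose proof (Rmin_l d1 dd); lra. }
      destruct (Hd a) as [e2 [He2 [_ G2]]]. { pose proof (Rmin_r d1 dd); lra. }
      exists (Rmin e1 e2); split; [apply Rmin_pos; auto|].
      intros y Hy HWy hy tby Hhy Htiesy.
      assert (Hvy : v y < 0).
      { assert (sgn (v y - v w) = -1) by (apply G2; eapply nbhd_mono; [apply Hy|apply Rmin_r]).
        apply sgn_m1 in H. lra. }
      revert Htiesy; simpl; destruct (total_order_T (v y) 0) as [[Hy1|Hy1]|Hy1]; intros Htiesy; try lra.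
      apply (G1 y ltac:(eapply nbhd_mono; [apply Hy|apply Rmin_l]) HWy hy tby Hhy Htiesy).
    +
      assert (Hp : tbw p = false).
      { destruct (tbw p) eqn:E; auto. assert (decreasing_into Q n W v h w) by (apply Htb; auto).
        pose proof (moves_excl Q n W v h w _ _ Hin H Hcst). lra. }
      rewrite Hp in Hties |- *.
      destruct (IHr (false :: p) Hnr Hties) as [d1 [Hd1 H1]].
      destruct Hcst as [dd [Hdd Hd]].
      exists (Rmin d1 dd); split; [apply Rmin_pos; auto|].
      intros a Ha. destruct (H1 a) as [e1 [He1 G1]]. { pose proof (Rmin_l d1 dd); lra. }
      destruct (Hd a) as [e2 [He2 [_ G2]]]. { pose proof (Rmin_r d1 dd); lra. }
      assert (He22 : 0 < e2 / (2 * K n)) by (pose proof (K_pos n); apply Rdiv_lt_0_compat; lra).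
      exists (Rmin e1 (e2 / (2 * K n))); split; [apply Rmin_pos; auto|].
      intros y Hy HWy hy tby Hhy Htiesy.
      assert (Hyc : dist n (vadd w (h a)) y < e2 / (2 * K n)).
      { destruct Hy as [_ Hy]. pose proof (Rmin_r e1 (e2 / (2 * K n))); lra. }
      assert (Hyq : inQn Q n y) by apply Hy.
      assert (Hz0 : forall z, dist n y z < e2 / (2 * K n) -> inQn Q n z -> v z = 0).
      { intros z Hz Hzq. assert (sgn (v z - v w) = 0).
        { apply G2. split; auto. apply (close3 n _ y z e2 He2 Hyc Hz). }
        apply sgn_0 in H. lra. }
      assert (Hvy : v y = 0) by (apply Hz0; auto; rewrite vd_self; auto).
      revert Htiesy; simpl; destruct (total_order_T (v y) 0) as [[Hy1|Hy1]|Hy1]; intros Htiesy; try lra.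
      destruct Htiesy as [Htby Htiesy].
      assert (Hq : tby p = false).
      { destruct (tby p) eqn:E; auto. exfalso.
        assert (Hdy : decreasing_into Q n W v hy y) by (apply Htby; auto).
        destruct Hdy as [dd' [Hdd' Hd']].
        destruct (near Q n hy y _ Hhy He22) as [dh [Hdh Hnear]].
        set (b := Rmin dd' dh / 2).
        assert (Hb : 0 < b < Rmin dd' dh) by (unfold b; pose proof (Rmin_pos dd' dh Hdd' Hdh); lra).
        destruct (Hd' b) as [e3 [He3 [_ G3]]]. { pose proof (Rmin_l dd' dh); lra. }
        assert (Hzq : inQn Q n (vadd y (hy b))) by (apply inQn_vadd; auto; apply Hhy).
        assert (sgn (v (vadd y (hy b)) - v y) = -1) by (apply G3; apply nbhd_self; auto).
        rewrite Hz0 in H; auto.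
        - rewrite Hvy, Rminus_0_r, sgn_00 in H. lra.
        - apply Hnear. pose proof (Rmin_r dd' dh); lra. }
      rewrite Hq in Htiesy |- *.
      apply (G1 y ltac:(eapply nbhd_mono; [apply Hy|apply Rmin_l]) HWy hy tby Hhy Htiesy).
    +
      assert (Hp : tbw p = false).
      { destruct (tbw p) eqn:E; auto. assert (decreasing_into Q n W v h w) by (apply Htb; auto).
        pose proof (moves_excl Q n W v h w _ _ Hin H Hinc). lra. }
      rewrite Hp in Hties |- *.
      destruct (IHr (false :: p) Hnr Hties) as [d1 [Hd1 H1]].
      destruct Hinc as [dd [Hdd Hd]].
      exists (Rmin d1 dd); split; [apply Rmin_pos; auto|].
      intros a Ha. destruct (H1 a) as [e1 [He1 G1]]. { pose proof (Rmin_l d1 dd); lra. }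
      destruct (Hd a) as [e2 [He2 [_ G2]]]. { pose proof (Rmin_r d1 dd); lra. }
      exists (Rmin e1 e2); split; [apply Rmin_pos; auto|].
      intros y Hy HWy hy tby Hhy Htiesy.
      assert (Hvy : 0 < v y).
      { assert (sgn (v y - v w) = 1) by (apply G2; eapply nbhd_mono; [apply Hy|apply Rmin_r]).
        apply sgn_1 in H. lra. }
      revert Htiesy; simpl; destruct (total_order_T (v y) 0) as [[Hy1|Hy1]|Hy1]; intros Htiesy; try lra.
      apply (G1 y ltac:(eapply nbhd_mono; [apply Hy|apply Rmin_l]) HWy hy tby Hhy Htiesy).
  -
    destruct (IHr (false :: p) Hnr Hties) as [d1 [Hd1 H1]].
    destruct (Hvc w HW (v w) ltac:(lra)) as [dv [Hdv Hv]].
    assert (Hdv2 : 0 < dv / (2 * K n)) by (pose proof (K_pos n); apply Rdiv_lt_0_compat; lra).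
    destruct (near Q n h w _ Hh Hdv2) as [dh [Hdh Hnear]].
    exists (Rmin d1 dh); split; [apply Rmin_pos; auto|].
    intros a Ha. destruct (H1 a) as [e1 [He1 G1]]. { pose proof (Rmin_l d1 dh); lra. }
    exists (Rmin e1 (dv / (2 * K n))); split; [apply Rmin_pos; auto|].
    intros y Hy HWy hy tby Hhy Htiesy.
    assert (Hvy : 0 < v y).
    { assert (dist n w y < dv).
      { apply (close3 n w (vadd w (h a)) y dv Hdv).
        - apply Hnear. pose proof (Rmin_r d1 dh); lra.
        - destruct Hy as [_ Hy]. pose proof (Rmin_r e1 (dv / (2 * K n))); lra. }
      specialize (Hv y HWy H). apply Rabs_def2 in Hv. lra. }
    revert Htiesy; simpl; destruct (total_order_T (v y) 0) as [[Hy1|Hy1]|Hy1]; intros Htiesy; try lra.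
    apply (G1 y ltac:(eapply nbhd_mono; [apply Hy|apply Rmin_l]) HWy hy tby Hhy Htiesy).
Qed.

Definition contat n (W : vec -> Prop) w (f : vec -> R) :=
  forall e, 0 < e -> exists d, 0 < d /\ forall y, W y -> dist n w y < d -> Rabs (f y - f w) < e.

Lemma contat_sub n W w f g : contat n W w f -> contat n W w g -> contat n W w (fun y => f y - g y).
Proof.
  intros Hf Hg e He.
  destruct (Hf (e/2) ltac:(lra)) as [d1 [Hd1 H1]]. destruct (Hg (e/2) ltac:(lra)) as [d2 [Hd2 H2]].
  exists (Rmin d1 d2); split; [apply Rmin_glb_lt; auto|]. intros y Hy Hd.
  pose proof (Rmin_l d1 d2); pose proof (Rmin_r d1 d2).
  specialize (H1 y Hy ltac:(lra)); specialize (H2 y Hy ltac:(lra)).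
  apply Rabs_def2 in H1; apply Rabs_def2 in H2. apply Rabs_def1; lra.
Qed.

Lemma contat_mul n W w f g : contat n W w f -> contat n W w g -> contat n W w (fun y => f y * g y).
Proof.
  intros Hf Hg e He.
  set (A := Rabs (g w)). set (B := Rabs (f w)).
  assert (HA : 0 <= A) by apply Rabs_pos. assert (HB : 0 <= B) by apply Rabs_pos.
  set (a := e / (3 * (A + 1))). set (b := Rmin 1 (e / (3 * (B + 1)))).
  assert (Ha : 0 < a) by (unfold a; apply Rdiv_lt_0_compat; lra).
  assert (Hb : 0 < b) by (unfold b; apply Rmin_glb_lt; [lra|apply Rdiv_lt_0_compat; lra]).
  assert (Ha2 : a * (A + 1) = e / 3) by (unfold a; field; lra).
  assert (Hb2 : b * (B + 1) <= e / 3).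
  { unfold b. assert (e / (3 * (B + 1)) * (B + 1) = e / 3) by (field; lra).
    pose proof (Rmin_r 1 (e / (3 * (B + 1)))). nra. }
  assert (Hb1 : b <= 1) by apply Rmin_l.
  destruct (Hf a Ha) as [d1 [Hd1 H1]]. destruct (Hg b Hb) as [d2 [Hd2 H2]].
  exists (Rmin d1 d2); split; [apply Rmin_glb_lt; auto|]. intros y Hy Hd.
  pose proof (Rmin_l d1 d2); pose proof (Rmin_r d1 d2).
  specialize (H1 y Hy ltac:(lra)); specialize (H2 y Hy ltac:(lra)).
  replace (f y * g y - f w * g w) with
    ((f y - f w) * (g y - g w) + (f y - f w) * g w + f w * (g y - g w)) by ring.
  eapply Rle_lt_trans; [apply Rabs_triang|].
  eapply Rle_lt_trans; [apply Rplus_le_compat_r; apply Rabs_triang|].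
  rewrite !Rabs_mult. fold A B.
  pose proof (Rabs_pos (f y - f w)). pose proof (Rabs_pos (g y - g w)).
  nra.
Qed.

Lemma closed_ge n W w F : W w -> contat n W w F ->
  (forall e, 0 < e -> exists y, W y /\ dist n w y < e /\ 0 <= F y) -> 0 <= F w.
Proof.
  intros HW Hc Hap. destruct (Rle_or_lt 0 (F w)) as [H|H]; auto.
  destruct (Hc (- F w) ltac:(lra)) as [d [Hd Hd']].
  destruct (Hap d Hd) as [y [Hy [Hdy HF]]].
  specialize (Hd' y Hy Hdy). apply Rabs_def2 in Hd'. lra.
Qed.

Lemma Rmin_close a b c d e : Rabs (a - c) < e -> Rabs (b - d) < e -> Rabs (Rmin a b - Rmin c d) < e.
Proof.
  intros H1 H2; apply Rabs_def2 in H1; apply Rabs_def2 in H2. apply Rabs_def1;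
  unfold Rmin; destruct (Rle_dec a b); destruct (Rle_dec c d); lra.
Qed.

Lemma fold_close {T} (f g : T -> R) e : forall xs x,
  (forall l, In l (x :: xs) -> Rabs (f l - g l) < e) ->
  Rabs (fold_right (fun y m => Rmin (f y) m) (f x) xs - fold_right (fun y m => Rmin (g y) m) (g x) xs) < e.
Proof.
  induction xs; intros x H; simpl.
  - apply H; simpl; auto.
  - apply Rmin_close.
    + apply H; simpl; auto.
    + apply IHxs. intros l [Hl|Hl]; apply H; simpl; auto.
Qed.

Lemma OPT_close S y w e : (forall l, Rabs (scost S y l - scost S w l) < e) -> 0 < e ->
  Rabs (OPT S y - OPT S w) < e.
Proof.
  intros H He. unfold OPT. destruct (sLenum S) as [|x xs].
  - rewrite Rminus_0_r, Rabs_R0; auto.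
  - apply (fold_close (fun l => scost S y l) (fun l => scost S w l)). auto.
Qed.

Lemma costs_close S w e : 0 < e -> (forall l, contat (sn S) (sW S) w (fun y => scost S y l)) ->
  forall lst, exists d, 0 < d /\ forall y, sW S y -> dist (sn S) w y < d ->
    forall l, In l lst -> Rabs (scost S y l - scost S w l) < e.
Proof.
  intros He Hc. induction lst as [|x xs IH].
  - exists 1; split; [lra|]. intros _ _ _ _ [].
  - destruct IH as [d1 [Hd1 H1]]. destruct (Hc x e He) as [d2 [Hd2 H2]].
    exists (Rmin d1 d2); split; [apply Rmin_glb_lt; auto|]. intros y Hy Hd l [Hl|Hl].
    + subst. apply H2; auto. pose proof (Rmin_r d1 d2); lra.
    + apply H1; auto. pose proof (Rmin_l d1 d2); lra.
Qed.

Lemma contat_OPT S w : (forall l, contat (sn S) (sW S) w (fun y => scost S y l)) ->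
  contat (sn S) (sW S) w (fun y => OPT S y).
Proof.
  intros Hc e He. destruct (costs_close S w (e/2) ltac:(lra) Hc (sLenum S)) as [d [Hd H]].
  exists d; split; auto. intros y Hy Hdy.
  assert (Rabs (OPT S y - OPT S w) < e/2); [|lra].
  apply OPT_close; [|lra]. intros l; apply H; auto. apply sLfull.
Qed.

Lemma approx Q (hQ : is_subfield Q) (P : problem)
  (hP : forall S, P S -> wf_structure Q S)
  (A : algorithm) (hA : is_algorithm Q P A)
  (hSP : uses_symbolic_perturbation Q P A)
  (C : forall S : structure, vec -> Prop) (hC : null_case Q P C)
  S (HS : P S) w (Hw : sW S w) eps0 (He0 : 0 < eps0) :
  exists y, sW S y /\ ~ C S y /\ dist (sn S) w y < eps0 /\ run A S y = run A S w.
Proof.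
  set (n := sn S). set (W := sW S).
  assert (Hwq : inQn Q n w) by (apply (proj1 (proj1 (proj2 (hP S HS)))); auto).
  destruct (hSP S HS w Hw) as [h [Hh1 [Hh0 [Hhc [Hcont [Htri Hties]]]]]].
  assert (Hh : hgood Q n h) by exact (conj Hh1 (conj Hh0 Hhc)).
  destruct (key Q hQ n W w h Hwq Hw Hh (atb A S w) (atree A S) nil) as [dk [Hdk G]]; auto.
  { intros v Hv. split; [apply (proj2 (hA S HS v Hv))|apply Htri; auto]. }
  destruct Hcont as [dc [Hdc Hc]].
  assert (He02 : 0 < eps0 / (2 * K n)) by (pose proof (K_pos n); apply Rdiv_lt_0_compat; lra).
  destruct (near Q n h w _ Hh He02) as [dh [Hdh Hnear]].
  set (a := Rmin dk (Rmin dc dh) / 2).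
  pose proof (Rmin_pos dc dh Hdc Hdh). pose proof (Rmin_pos dk _ Hdk H).
  pose proof (Rmin_l dk (Rmin dc dh)). pose proof (Rmin_r dk (Rmin dc dh)).
  pose proof (Rmin_l dc dh). pose proof (Rmin_r dc dh).
  destruct (G a) as [ek [Hek Gk]]. { unfold a; lra. }
  destruct (Hc a) as [ec [Hec Gc]]. { unfold a; lra. }
  set (e := Rmin ek (Rmin ec (eps0 / (2 * K n)))).
  assert (He : 0 < e) by (unfold e; repeat apply Rmin_pos; auto).
  pose proof (Rmin_l ek (Rmin ec (eps0 / (2 * K n)))). pose proof (Rmin_r ek (Rmin ec (eps0 / (2 * K n)))).
  pose proof (Rmin_l ec (eps0 / (2 * K n))). pose proof (Rmin_r ec (eps0 / (2 * K n))).
  fold e in H5, H6.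
  set (c := vadd w (h a)).
  assert (Hcq : inQn Q n c) by (apply inQn_vadd; auto).
  set (U := fun y => exists r, 0 < r /\ inQn Q n y /\ forall z, nbhd Q n y r z -> nbhd Q n c e z).
  assert (HU : is_open Q n U).
  { split. { intros x [r [_ [Hx _]]]; auto. }
    intros x [r [Hr [Hx Hxr]]].
    assert (Hr2 : 0 < r / (2 * K n)) by (pose proof (K_pos n); apply Rdiv_lt_0_compat; lra).
    exists (r / (2 * K n)); split; auto.
    intros y [Hyq Hy]. exists (r / (2 * K n)); split; auto; split; auto.
    intros z [Hzq Hz]. apply Hxr. split; auto. apply (close3 n x y z r Hr Hy Hz). }
  assert (HUc : U c).
  { assert (He2 : 0 < e / (2 * K n)) by (pose proof (K_pos n); apply Rdiv_lt_0_compat; lra).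
    exists (e / (2 * K n)); split; auto; split; auto.
    intros z [Hzq Hz]. split; auto. apply (close3 n c c z e He); auto. rewrite vd_self; auto. }
  assert (HUsub : forall y, U y -> nbhd Q n c e y).
  { intros y [r [Hr [Hyq Hy]]]. apply Hy, nbhd_self; auto. }
  destruct (classic (exists y, U y /\ ~ (W y /\ C S y))) as [[y [HUy HnC]]|Hno].
  - assert (Hy := HUsub y HUy).
    assert (HWy : W y) by (apply (Gc y); eapply nbhd_mono; [apply Hy|lra]).
    exists y; split; auto; split; [tauto|split].
    + apply (close3 n w c y eps0 He0).
      * apply Hnear; unfold a; lra.
      * destruct Hy as [_ Hy]; lra.
    + destruct (hSP S HS y HWy) as [hy [Hy1 [Hy0 [Hyc [_ [_ Htiesy]]]]]].
      unfold run. apply (Gk y ltac:(eapply nbhd_mono; [apply Hy|lra]) HWy hy (atb A S y)); auto.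
      exact (conj Hy1 (conj Hy0 Hyc)).
  - exfalso. apply (hC S HS U HU (fun y Hy => NNPP _ (fun Hn => Hno (ex_intro _ y (conj Hy Hn)))) c HUc).
Qed.

Theorem corollary1 (Q : R -> Prop) (hQ : is_subfield Q) (P : problem)
  (hP : forall S, P S -> wf_structure Q S)
  (A : algorithm) (hA : is_algorithm Q P A)
  (hSP : uses_symbolic_perturbation Q P A)
  (C : forall S : structure, vec -> Prop) (hC : null_case Q P C) :
  (* (d) *)
  ((forall S, P S -> forall w, sW S w -> ~ C S w ->
      exists l, run A S w = Some l /\ scost S w l = OPT S w) ->
   forall S, P S -> forall w, sW S w ->
      exists l, run A S w = Some l /\ scost S w l = OPT S w) /\
  (* (e) *)
  (forall c : structure -> vec -> R,
     (forall S, P S -> continuous_on (sn S) (sW S) (c S)) ->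
     (forall S, P S -> forall w, sW S w -> ~ C S w ->
        exists l, run A S w = Some l /\ scost S w l <= c S w * OPT S w) ->
     forall S, P S -> forall w, sW S w ->
        exists l, run A S w = Some l /\ scost S w l <= c S w * OPT S w).
Proof.
  assert (Hcost : forall S, P S -> forall w, sW S w ->
            forall l, contat (sn S) (sW S) w (fun y => scost S y l)).
  { intros S HS w Hw l e He. apply (proj2 (proj2 (hP S HS)) l w Hw e He). }
  assert (Gen : forall (Prop_ : forall S, vec -> sL S -> Prop) S, P S -> forall w, sW S w ->
     (forall y, sW S y -> ~ C S y -> exists l, run A S y = Some l /\ Prop_ S y l) ->
     exists l, run A S w = Some l /\
       forall e, 0 < e -> exists y, sW S y /\ Defs.dist (sn S) w y < e /\ Prop_ S y l).
  { intros Pr S HS w Hw Hyp.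
    destruct (approx Q hQ P hP A hA hSP C hC S HS w Hw 1 ltac:(lra)) as [y0 [Hy0 [HC0 [_ Hr0]]]].
    destruct (Hyp y0 Hy0 HC0) as [l [Hl _]]. exists l; split; [congruence|].
    intros e He. destruct (approx Q hQ P hP A hA hSP C hC S HS w Hw e He) as [y [Hy [HC [Hd Hr]]]].
    destruct (Hyp y Hy HC) as [l' [Hl' Hp]]. exists y; repeat split; auto.
    assert (l' = l) by congruence. subst; auto. }
  split.
  - intros Hyp S HS w Hw.
    destruct (Gen (fun S y l => scost S y l = OPT S y) S HS w Hw (Hyp S HS)) as [l [Hl Happ]].
    exists l; split; auto.
    assert (Hc1 := contat_sub _ _ _ _ _ (Hcost S HS w Hw l) (contat_OPT S w (Hcost S HS w Hw))).
    assert (Hc2 := contat_sub _ _ _ _ _ (contat_OPT S w (Hcost S HS w Hw)) (Hcost S HS w Hw l)).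
    pose proof (closed_ge _ _ _ _ Hw Hc1). pose proof (closed_ge _ _ _ _ Hw Hc2).
    cbv beta in *.
    assert (0 <= scost S w l - OPT S w).
    { apply H. intros e He. destruct (Happ e He) as [y [? [? ?]]]. exists y; repeat split; auto; lra. }
    assert (0 <= OPT S w - scost S w l).
    { apply H0. intros e He. destruct (Happ e He) as [y [? [? ?]]]. exists y; repeat split; auto; lra. }
    lra.
  - intros c Hcc Hyp S HS w Hw.
    destruct (Gen (fun S y l => scost S y l <= c S y * OPT S y) S HS w Hw (Hyp S HS)) as [l [Hl Happ]].
    exists l; split; auto.
    assert (Hcw : contat (sn S) (sW S) w (c S)) by (intros e He; apply (Hcc S HS w Hw e He)).
    assert (Hc1 := contat_sub _ _ _ _ _ (contat_mul _ _ _ _ _ Hcw (contat_OPT S w (Hcost S HS w Hw))) (Hcost S HS w Hw l)).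
    pose proof (closed_ge _ _ _ _ Hw Hc1). cbv beta in *.
    assert (0 <= c S w * OPT S w - scost S w l); [|lra].
    apply H. intros e He. destruct (Happ e He) as [y [? [? ?]]]. exists y; repeat split; auto; lra.
Qed.
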